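(* Let $N_1\ge N_2$, $N_3$, $T$ be nonnegative integers with $T\ge N_1+N_3$. For all positive integers $A,B$ the rate pair $$R_1=\frac{A(T+1-N_1-N_3)}{n},\qquad R_2=\frac{B(T+1-N_2-N_3)}{n},$$ where $n=\max\big(A(T+1-N_3),\,B(T+1-N_3),\,A(T+1-N_1)+B(T+1-N_2)\big)$, is achievable.
   Context: Network: two sources, one relay, one destination; no direct source–destination link. Source $i\in\{1,2\}$ has messages $s_{t,i}\in\mathbb{F}^{k_i}$, $t\ge0$, over a finite field $\mathbb{F}$. A time-invariant $(n_1,n_2,n_3,k_1,k_2,T)_{\mathbb{F}}$ streaming code (unbounded memory): source $i$ sends at time $t$ a packet $x^{(1)}_{t,i}\in\mathbb{F}^{n_i}$, a fixed function of $s_{0,i},\dots,s_{t,i}$; a relay function $g$, the same at every time $t$, takes the packets received from both sources at times $t-T,\dots,t$ together with the relay's previously produced estimates of past source messages, and outputs a packet $x^{(2)}_t\in\mathbb{F}^{n_3}$ and estimates of $s_{t-T,1},s_{t-T,2}$; the destination outputs at time $t+T$ estimates $\hat s_{t,i}$ from its received packets up to time $t+T$. Each link is a packet erasure channel (received packet is the sent one or the erasure symbol $*$). An $N$-erasure sequence has exactly $N$ erased times; link source $i\to$relay suffers an arbitrary $N_i$-erasure sequence, relay$\to$destination an arbitrary $N_3$-erasure sequence. The code is $(N_1,N_2,N_3)$-achievable if $\hat s_{t,i}=s_{t,i}$ always. Rate pair: $R_i=k_i/n$, $n=\max(n_1,n_2,n_3)$; a rate pair is achievable if it is the rate pair of some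 $(N_1,N_2,N_3)$-achievable code (over some finite field). *)

(* Defs.v *)
From HB Require Import structures.
From mathcomp Require Import all_boot all_order all_algebra.
Set Implicit Arguments. Unset Strict Implicit. Unset Printing Implicit Defensive.
Import GRing.Theory Num.Theory.

Definition erasure_seq (N : nat) (e : nat -> bool) : Prop :=
  exists s : seq nat, [/\ uniq s, size s = N & forall t, e t = (t \in s)].

Definition channel {X : Type} (e : nat -> bool) (x : nat -> X) (t : nat)
  : option X := if e t then None else Some (x t).

Record code (F : finFieldType) (n1 n2 n3 k1 k2 T : nat) := Code {
  (* source i sends at time t  enc_i [:: s_{0,i}; ...; s_{t,i}] *)
  enc1 : seq 'rV[F]_k1 -> 'rV[F]_n1;
  enc2 : seq 'rV[F]_k2 -> 'rV[F]_n2;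
  (* relay function g, the same at every time t: inputs are the received
     packets of source 1 and source 2 at times t-T,...,t (times < 0 omitted)
     and the relay's previously produced estimates of past source messages
     (those of s_0,...,s_{t-T-1}); outputs the relay packet and the
     estimates of s_{t-T,1}, s_{t-T,2}. *)
  relay : seq (option 'rV[F]_n1) -> seq (option 'rV[F]_n2) ->
          seq ('rV[F]_k1 * 'rV[F]_k2) -> 'rV[F]_n3 * ('rV[F]_k1 * 'rV[F]_k2);
  (* destination: at time t+T, from its received packets at times
     0,...,t+T, outputs estimates of s_{t,1}, s_{t,2}. *)
  dec : seq (option 'rV[F]_n3) -> 'rV[F]_k1 * 'rV[F]_k2
}.

Section Run.
Variables (F : finFieldType) (n1 n2 n3 k1 k2 T : nat).
Variable C : code F n1 n2 n3 k1 k2 T.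
Variables (s1 : nat -> 'rV[F]_k1) (s2 : nat -> 'rV[F]_k2).
Variables (e1 e2 e3 : nat -> bool).

Definition src1_packet (t : nat) : 'rV[F]_n1 := enc1 C (mkseq s1 t.+1).
Definition src2_packet (t : nat) : 'rV[F]_n2 := enc2 C (mkseq s2 t.+1).

Definition relay_rcv1 := channel e1 src1_packet.
Definition relay_rcv2 := channel e2 src2_packet.

(* received packets at times t-T, ..., t (truncated at time 0) *)
Definition window {X : Type} (y : nat -> X) (t : nat) : seq X :=
  [seq y j | j <- iota (t - T) (t - (t - T)).+1].

Fixpoint relay_outs (t : nat) : seq ('rV[F]_n3 * ('rV[F]_k1 * 'rV[F]_k2)) :=
  match t with
  | 0 => [::]
  | t'.+1 =>
      let prev := relay_outs t' in
      rcons prev (relay C (window relay_rcv1 t') (window relay_rcv2 t')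
                          (drop T (map snd prev)))
  end.

Definition relay_packet (t : nat) : 'rV[F]_n3 :=
  (relay C (window relay_rcv1 t) (window relay_rcv2 t)
           (drop T (map snd (relay_outs t)))).1.

Definition dest_rcv := channel e3 relay_packet.

Definition dest_estimate (t : nat) : 'rV[F]_k1 * 'rV[F]_k2 :=
  dec C (mkseq dest_rcv (t + T).+1).
End Run.

Definition achievable_code (F : finFieldType) (n1 n2 n3 k1 k2 T : nat)
  (C : code F n1 n2 n3 k1 k2 T) (N1 N2 N3 : nat) : Prop :=
  forall (s1 : nat -> 'rV[F]_k1) (s2 : nat -> 'rV[F]_k2) (e1 e2 e3 : nat -> bool),
    erasure_seq N1 e1 -> erasure_seq N2 e2 -> erasure_seq N3 e3 ->
    forall t, dest_estimate C s1 s2 e1 e2 e3 t = (s1 t, s2 t).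

Definition rate_pair_achievable (N1 N2 N3 T : nat) (R1 R2 : rat) : Prop :=
  exists (F : finFieldType) (n1 n2 n3 k1 k2 : nat) (C : code F n1 n2 n3 k1 k2 T),
    [/\ achievable_code C N1 N2 N3,
        R1 = (k1%:R / (maxn n1 (maxn n2 n3))%:R)%R
      & R2 = (k2%:R / (maxn n1 (maxn n2 n3))%:R)%R].

(* Main.v *)
Require Import Defs.
From mathcomp Require Import all_boot all_order all_algebra.
From mathcomp Require Import zify.

Module Helpers.
Set Implicit Arguments. Unset Strict Implicit. Unset Printing Implicit Defensive.
Import GRing.Theory Num.Theory.
Local Open Scope ring_scope.

Section MDS.
Variables (F : fieldType) (al : nat -> F) (L : nat).
Hypothesis al_inj : forall i j, (i < L)%N -> (j < L)%N -> al i = al j -> i = j.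

Definition gco (r j : nat) : F := \prod_(i < j) (al r - al i).

Lemma gco_zero r j : (r < j)%N -> gco r j = 0.
Proof.
move=> rj; rewrite /gco (bigD1 (Ordinal rj)) //= subrr mul0r //.
Qed.

Lemma gco_diag r : (r < L)%N -> gco r r != 0.
Proof.
move=> rL; rewrite /gco; apply/prodf_neq0 => i _; rewrite subr_eq0.
apply/eqP => /al_inj; move: (ltn_ord i) => ir H.
have := H rL (ltn_trans ir rL); lia.
Qed.

Lemma mds (a A : nat) (d : 'M[F]_(a, A)) (S : {set 'I_L}) :
  (a <= #|S|)%N ->
  (forall r : 'I_L, r \in S -> forall l, \sum_(j < a) gco r j * d j l = 0) ->
  d = 0.
Proof.
move=> aS H; apply/matrixP => j0 l; rewrite mxE.
pose Q : {poly F} := \sum_(j < a) d j l *: \prod_(i < j) ('X - (al i)%:P).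
have QE x : Q.[x] = \sum_(j < a) d j l * \prod_(i < j) (x - al i).
  rewrite /Q horner_sum; apply: eq_bigr => j _.
  by rewrite hornerZ horner_prod; congr (_ * _); apply: eq_bigr => i _; rewrite hornerXsubC.
have Q0 : Q = 0.
  apply: (@roots_geq_poly_eq0 _ Q [seq al (val r) | r <- enum S]).
  - apply/allP => x /mapP [r]; rewrite mem_enum => rS ->.
    rewrite /root QE; apply/eqP; rewrite -[RHS](H r rS l).
    by apply: eq_bigr => j _; rewrite mulrC.
  - rewrite map_inj_in_uniq ?enum_uniq // => x y _ _ /al_inj.
    by move=> h; apply: val_inj; apply: h; apply: ltn_ord.
  - rewrite size_map -cardE; apply: leq_trans aS.
    apply: leq_trans (size_sum _ _ _) _.
    apply/bigmax_leqP => j _; apply: leq_trans (size_scale_leq _ _) _.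
    rewrite size_prod_XsubC; have := deprecated_filter_index_enum 'I_j.
    rewrite (@eq_filter _ _ predT) // filter_predT => ->; by rewrite size_enum_ord.
have aL : (a <= L)%N by apply: leq_trans aS _; rewrite -[X in (_ <= X)%N](card_ord L); exact: max_card.
have key : forall r, (r < a)%N -> forall j : 'I_a, (j <= r)%N -> d j l = 0.
  elim/ltn_ind => r IH ra j jr.
  have rL : (r < L)%N by apply: leq_trans ra aL.
  have := congr1 (fun p => p.[al r]) Q0; rewrite QE hornerC.
  change (\sum_(j < a) d j l * gco r j = 0 -> d j l = 0).
  rewrite (bigD1 (Ordinal ra)) //= big1 ?addr0.
    move/eqP; rewrite mulf_eq0 (negbTE (gco_diag rL)) orbF => /eqP dr.
    case: (ltngtP j r) => [jlt|jgt|jeq].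
    - by apply: (IH j) => //; apply: ltn_trans jlt ra.
    - by move: jr; rewrite leqNgt jgt.
    - by rewrite (_ : j = Ordinal ra) //; apply: val_inj.
  move=> k kr; case: (ltngtP k r) => [klt|kgt|keq].
  - by rewrite (IH k klt (ltn_trans klt ra) k (leqnn _)) mul0r.
  - by rewrite (gco_zero kgt) mulr0.
  - by move: kr; rewrite (_ : k = Ordinal ra) ?eqxx //; apply: val_inj.
by apply: (key j0) => //.
Qed.
End MDS.


Lemma count_bad (L : nat) (P : {set 'I_L}) (f : 'I_L -> nat) (s : seq nat) :
  {in P &, injective f} -> (forall r, r \in P -> f r \in s) -> (#|P| <= size s)%N.
Proof.
move=> finj fs; rewrite cardE -(size_map f); apply: uniq_leq_size.
  rewrite map_inj_in_uniq ?enum_uniq // => x y; rewrite !mem_enum; exact: finj.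
by move=> x /mapP [r]; rewrite mem_enum => Pr ->; apply: fs.
Qed.

Section Comp.
Variables (F : finFieldType) (al : nat -> F) (A N M T : nat).
Hypothesis NMT : (N + M <= T)%N.
Hypothesis al_inj : forall i j, (i <= T)%N -> (j <= T)%N -> al i = al j -> i = j.

Definition ca := (T.+1 - N - M)%N.
Definition LS := (ca + N)%N.
Definition LR := (ca + M)%N.

Definition srcM (X : nat -> 'M[F]_(ca, A)) (s : nat) : 'M[F]_(LS, A) :=
  \matrix_(r < LS, l < A) \sum_(j < ca) gco al r j *
     (if (r <= s + j)%N then X (s + j - r)%N (rev_ord j) l else 0).

Definition relM (X : nat -> 'M[F]_(ca, A)) (s : nat) : 'M[F]_(LR, A) :=
  \matrix_(r < LR, l < A) \sum_(j < ca) gco al r j *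
     (if (N + r <= s)%N then X (s - N - r)%N j l else 0).

Definition encC (l : seq 'rV[F]_(ca * A)) : 'rV[F]_(LS * A) :=
  mxvec (srcM (fun i => vec_mx (nth 0 l i)) (size l).-1).

Definition Hist (mem : seq 'rV[F]_(ca * A)) (c : {ffun 'I_T.+1 -> 'M[F]_(ca, A)})
  (i : nat) : 'M[F]_(ca, A) :=
  if (i < size mem)%N then vec_mx (nth 0 mem i) else c (inord (i - size mem)).

Definition consC (win : seq (option 'rV[F]_(LS * A))) mem c :=
  [forall i : 'I_T.+1, (i < size win)%N ==>
     match nth None win i with
     | Some v => v == mxvec (srcM (Hist mem c) (size mem + i))
     | None => true end].

Definition relC (win : seq (option 'rV[F]_(LS * A))) (mem : seq 'rV[F]_(ca * A)) :
  'rV[F]_(LR * A) * 'rV[F]_(ca * A) :=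
  let c := odflt [ffun => 0] [pick c | consC win mem c] in
  (mxvec (relM (Hist mem c) (size mem + size win).-1), mxvec (Hist mem c (size mem))).

Definition decC (ys : seq (option 'rV[F]_(LR * A))) : 'rV[F]_(ca * A) :=
  let t := ((size ys).-1 - T)%N in
  mxvec (odflt 0 [pick x : 'M[F]_(ca, A) | [forall r : 'I_LR,
    match nth None ys (t + N + r) with
    | Some v => [forall l, vec_mx v r l == \sum_(j < ca) gco al r j * x j l]
    | None => true end]]).

Lemma al_injS : forall i j, (i < LS)%N -> (j < LS)%N -> al i = al j -> i = j.
Proof. move=> i j hi hj; apply: al_inj; rewrite /LS /ca in hi hj; lia. Qed.
Lemma al_injR : forall i j, (i < LR)%N -> (j < LR)%N -> al i = al j -> i = j.
Proof. move=> i j hi hj; apply: al_inj; rewrite /LR /ca in hi hj; lia. Qed.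

Lemma srcM_local X Y s : (forall i, (i <= s)%N -> X i = Y i) -> srcM X s = srcM Y s.
Proof.
move=> H; apply/matrixP => r l; rewrite !mxE; apply: eq_bigr => j _.
case: (leqP (j : nat) r) => [jr|rj]; last by rewrite gco_zero ?mul0r.
case: ifP => // h; rewrite H //; lia.
Qed.

Lemma srcM_entry X E (r : 'I_LS) l : (LS <= E.+1 + r)%N ->
  srcM X (E.+1 + r - LS)%N r l = \sum_(j < ca) gco al r j *
     (if (LS <= E.+1 + j)%N then X (E.+1 + j - LS)%N (rev_ord j) l else 0).
Proof.
move=> h; rewrite mxE; apply: eq_bigr => j _; congr (_ * _).
have -> : (r <= E.+1 + r - LS + j)%N = (LS <= E.+1 + j)%N.
  apply/idP/idP => /leP h1; apply/leP; lia.
case: ifP => // _; have -> : (E.+1 + r - LS + j - r = E.+1 + j - LS)%N by lia.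
by [].
Qed.

Lemma src_unique X Y (s : seq nat) tau :
  uniq s -> (size s <= N)%N ->
  (forall sg, (sg <= tau)%N -> sg \notin s -> srcM Y sg = srcM X sg) ->
  forall t (j : 'I_ca) l, (t + N + j <= tau)%N -> Y t j l = X t j l.
Proof.
move=> us ss Hag t j l htj.
pose E := (t + j + N)%N.
pose w (Z : nat -> 'M[F]_(ca, A)) : 'M[F]_(ca, A) := \matrix_(p < ca, l < A)
  (if (LS <= E.+1 + p)%N then Z (E.+1 + p - LS)%N (rev_ord p) l else 0).
have D : w Y - w X = 0.
  apply: (@mds F al LS al_injS ca A (w Y - w X)
            [set r : 'I_LS | ~~ ((LS <= E.+1 + r)%N && ((E.+1 + r - LS)%N \in s))]).
  - have hc := cardsC [set r : 'I_LS | ~~ ((LS <= E.+1 + r)%N && ((E.+1 + r - LS)%N \in s))].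
    have hb : (#|~: [set r : 'I_LS | ~~ ((LS <= E.+1 + r)%N && ((E.+1 + r - LS)%N \in s))]| <= size s)%N.
      apply: (@count_bad LS _ (fun r : 'I_LS => (E.+1 + r - LS)%N)).
        move=> x y; rewrite !inE !negbK => /andP [hx _] /andP [hy _].
        move=> hxy; apply: val_inj => /=; move: hx hy hxy; rewrite /E /LS; clear; lia.
      by move=> r; rewrite !inE negbK => /andP [].
    rewrite card_ord in hc; have hL : LS = (ca + N)%N by [].
    move: hc hb ss hL; set S1 := #|_|; set S2 := #|_|; lia.
  - move=> r; rewrite inE => hr l'.
    have -> : \sum_(j0 < ca) gco al r j0 * (w Y - w X) j0 l' =
      \sum_(j0 < ca) gco al r j0 * w Y j0 l' - \sum_(j0 < ca) gco al r j0 * w X j0 l'.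
      by rewrite -sumrB; apply: eq_bigr => k _; rewrite !mxE mulrBr.
    apply/eqP; rewrite subr_eq0; apply/eqP.
    case hle: (LS <= E.+1 + r)%N; last first.
      have z : forall Z, \sum_(k < ca) gco al r k * w Z k l' = 0.
        move=> Z; apply: big1 => k _; rewrite mxE.
        case: (leqP (k : nat) r) => [kr|rk]; last by rewrite gco_zero ?mul0r.
        rewrite ifF ?mulr0 //; apply/negbTE; rewrite -ltnNge.
        move: hle => /negbT; rewrite -ltnNge => h; lia.
      by rewrite !z.
    move: hr; rewrite hle /= => hr.
    have hsg : (E.+1 + r - LS <= tau)%N by move: (ltn_ord r) => ?; rewrite /E; lia.
    have := congr1 (fun Mx : 'M[F]_(LS, A) => Mx r l') (Hag (E.+1 + r - LS)%N hsg hr).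
    rewrite !srcM_entry ?hle // => h.
    by apply: (etrans _ (etrans h _)); apply: eq_bigr => k _; rewrite mxE.
have := congr1 (fun Mx : 'M[F]_(ca, A) => Mx (rev_ord j) l) D.
rewrite !mxE rev_ordK /= => /eqP; rewrite subr_eq0 => /eqP.
have -> : (LS <= E.+1 + (ca - j.+1))%N = true.
  move: (ltn_ord j) => ?; apply/leP; rewrite /E /LS; lia.
have -> // : (E.+1 + (ca - j.+1) - LS = t)%N.
move: (ltn_ord j) => ?; rewrite /E /LS; lia.
Qed.

Lemma relC_ok (X : nat -> 'M[F]_(ca, A)) (e : nat -> bool) (s : seq nat) tau :
  uniq s -> (size s <= N)%N -> (forall sg, e sg = (sg \in s)) ->
  let win := [seq channel e (fun sg => mxvec (srcM X sg)) sg
               | sg <- iota (tau - T)%N (tau - (tau - T))%N.+1] in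
  let mem := mkseq (fun i => mxvec (X i)) (tau - T)%N in
  (relC win mem).1 = mxvec (relM X tau) /\
  ((T <= tau)%N -> (relC win mem).2 = mxvec (X (tau - T)%N)).
Proof.
move=> us ss es win mem.
have szm : size mem = (tau - T)%N by rewrite size_mkseq.
have szw : size win = (tau - (tau - T))%N.+1 by rewrite size_map size_iota.
have nthw : forall i, (i < size win)%N -> nth None win i =
    channel e (fun sg => mxvec (srcM X sg)) (tau - T + i)%N.
  move=> i hi; rewrite (nth_map 0%N); last by rewrite size_iota -szw.
  by rewrite nth_iota // -szw.
have Hmem : forall c i, (i < tau - T)%N -> Hist mem c i = X i.
  move=> c i hi; rewrite /Hist szm hi nth_mkseq //; exact: mxvecK.
pose c0 : {ffun 'I_T.+1 -> 'M[F]_(ca, A)} := [ffun i : 'I_T.+1 => X (tau - T + i)%N].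
have H0 : forall i, (i <= tau - T + T)%N -> Hist mem c0 i = X i.
  move=> i hi; case: (ltnP i (tau - T)) => [hl|hg]; first exact: Hmem.
  rewrite /Hist szm ltnNge hg /= ffunE inordK; last by lia.
  by congr X; lia.
have C0 : consC win mem c0.
  apply/forallP => i; apply/implyP => hi; rewrite nthw // /channel.
  case: (e _) => //; rewrite szm; apply/eqP; congr mxvec.
  apply: srcM_local => k hk; symmetry; apply: H0; move: (ltn_ord i) => ?; lia.
rewrite /relC; case: pickP => [c Hc|]; last by move/(_ c0); rewrite C0.
rewrite /=.
set Y := Hist mem c.
have Hag : forall sg, (sg <= tau)%N -> sg \notin s -> srcM Y sg = srcM X sg.
  move=> sg hsg hns; case: (ltnP sg (tau - T)) => [hl|hg].
    by apply: srcM_local => k hk; apply: Hmem; lia.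
  have hi : (sg - (tau - T) < T.+1)%N by lia.
  move/forallP: Hc => /(_ (Ordinal hi)) /implyP; rewrite szw /=.
  have -> : (sg - (tau - T) < (tau - (tau - T)).+1)%N = true by apply/leP; lia.
  move=> /(_ isT); rewrite nthw ?szw /=; last by lia.
  rewrite /channel.
  have -> : (tau - T + (sg - (tau - T)) = sg)%N by lia.
  rewrite es (negbTE hns) szm.
  have -> : (tau - T + (sg - (tau - T)) = sg)%N by lia.
  by move/eqP/(can_inj mxvecK).
have U := src_unique us ss Hag.
rewrite szm size_map size_iota.
have -> : (tau - T + (tau - (tau - T)).+1).-1 = tau by lia.
split.
  congr mxvec; apply/matrixP => r l; rewrite !mxE; apply: eq_bigr => j _.
  case: (leqP (j : nat) r) => [jr|rj]; last by rewrite gco_zero ?mul0r.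
  case: ifP => // h; rewrite U //; lia.
move=> hT; congr mxvec; apply/matrixP => j l; apply: U.
move: (ltn_ord j); rewrite /ca => ?; lia.
Qed.

Lemma decC_ok (X : nat -> 'M[F]_(ca, A)) (e : nat -> bool) (s : seq nat) t :
  uniq s -> (size s <= M)%N -> (forall sg, e sg = (sg \in s)) ->
  decC (mkseq (channel e (fun sg => mxvec (relM X sg))) (t + T).+1) = mxvec (X t).
Proof.
move=> us ss es; rewrite /decC size_mkseq /=.
have -> : (t + T - T = t)%N by lia.
set ys := mkseq _ _.
have nthy : forall r : 'I_LR, nth None ys (t + N + r) =
    channel e (fun sg => mxvec (relM X sg)) (t + N + r).
  move=> r; rewrite nth_mkseq //; move: (ltn_ord r); rewrite /LR /ca => ?; lia.
have relE : forall (r : 'I_LR) l, relM X (t + N + r) r l = \sum_(j < ca) gco al r j * X t j l.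
  move=> r l; rewrite mxE; apply: eq_bigr => j _.
  rewrite ifT; last by lia.
  by have -> : (t + N + r - N - r = t)%N by lia.
case: pickP => [x Hx|]; last first.
  move/(_ (X t)) => /negbT/negP; case; apply/forallP => r.
  rewrite nthy /channel; case: (e _) => //; apply/forallP => l.
  by rewrite mxvecK relE.
congr mxvec.
have D : x - X t = 0.
  apply: (@mds F al LR al_injR ca A (x - X t) [set r : 'I_LR | (t + N + r)%N \notin s]).
  - have hc := cardsC [set r : 'I_LR | (t + N + r)%N \notin s].
    have hb : (#|~: [set r : 'I_LR | (t + N + r)%N \notin s]| <= size s)%N.
      apply: (@count_bad LR _ (fun r : 'I_LR => (t + N + r)%N)).
        by move=> u v _ _ h; apply: val_inj; rewrite /= in h *; lia.
      by move=> r; rewrite !inE negbK.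
    rewrite card_ord in hc; have hL : LR = (ca + M)%N by [].
    move: hc hb ss hL; set S1 := #|_|; set S2 := #|_|; lia.
  - move=> r; rewrite inE => hr l.
    move/forallP: Hx => /(_ r); rewrite nthy /channel es (negbTE hr) mxvecK.
    move/forallP => /(_ l); rewrite relE => /eqP h.
    rewrite (eq_bigr (fun j : 'I_ca => gco al r j * x j l - gco al r j * X t j l)); last first.
      by move=> j _; rewrite !mxE mulrBr.
    by rewrite sumrB h subrr.
by apply/eqP; rewrite -subr_eq0 D.
Qed.

End Comp.
Arguments relC : simpl never.
Arguments decC : simpl never.
Arguments encC : simpl never.



Section Final.
Local Open Scope nat_scope.
Variables (F : finFieldType) (al : nat -> F) (T N1 N2 N3 A B : nat).

Definition fcode : code F (LS N1 N3 T * A) (LS N2 N3 T * B)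
   (LR N1 N3 T * A + LR N2 N3 T * B) (ca N1 N3 T * A) (ca N2 N3 T * B) T :=
  @Code F _ _ _ _ _ T (@encC F al A N1 N3 T) (@encC F al B N2 N3 T)
    (fun w1 w2 mem =>
       let o1 := @relC F al A N1 N3 T w1 (map fst mem) in
       let o2 := @relC F al B N2 N3 T w2 (map snd mem) in
       (row_mx o1.1 o2.1, (o1.2, o2.2)))
    (fun ys => (@decC F al A N1 N3 T (map (omap lsubmx) ys),
                @decC F al B N2 N3 T (map (omap rsubmx) ys))).

Lemma relay_fcode w1 w2 mem : relay fcode w1 w2 mem =
  (row_mx (@relC F al A N1 N3 T w1 (map fst mem)).1 (@relC F al B N2 N3 T w2 (map snd mem)).1,
   ((@relC F al A N1 N3 T w1 (map fst mem)).2, (@relC F al B N2 N3 T w2 (map snd mem)).2)).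
Proof. by []. Qed.
Lemma dec_fcode ys : dec fcode ys =
  (@decC F al A N1 N3 T (map (omap lsubmx) ys), @decC F al B N2 N3 T (map (omap rsubmx) ys)).
Proof. by []. Qed.

Hypothesis H13 : (N1 + N3 <= T)%N.
Hypothesis H23 : (N2 + N3 <= T)%N.
Hypothesis al_inj : forall i j, (i <= T)%N -> (j <= T)%N -> al i = al j -> i = j.

Lemma fcode_ok : achievable_code fcode N1 N2 N3.
Proof.
rewrite /achievable_code => s1 s2 e1 e2 e3 q1 q2 q3 t.
case: q1 => l1 [u1 z1 E1]; case: q2 => l2 [u2 z2 E2]; case: q3 => l3 [u3 z3 E3].
pose X1 i : 'M[F]_(ca N1 N3 T, A) := vec_mx (s1 i).
pose X2 i : 'M[F]_(ca N2 N3 T, B) := vec_mx (s2 i).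
have src1 : forall sg, src1_packet fcode s1 sg = mxvec (srcM al X1 sg).
  move=> sg; rewrite /src1_packet /= /encC size_mkseq /=; congr mxvec.
  by apply: (srcM_local al H13) => i hi; rewrite nth_mkseq.
have src2 : forall sg, src2_packet fcode s2 sg = mxvec (srcM al X2 sg).
  move=> sg; rewrite /src2_packet /= /encC size_mkseq /=; congr mxvec.
  by apply: (srcM_local al H23) => i hi; rewrite nth_mkseq.
pose out i := relay fcode (window T (relay_rcv1 fcode s1 e1) i) (window T (relay_rcv2 fcode s2 e2) i)
   (drop T (map snd (relay_outs fcode s1 s2 e1 e2 i))).
have ro : forall tau, relay_outs fcode s1 s2 e1 e2 tau = mkseq out tau.
  by elim => [|tau IH] //; rewrite mkseqS -IH.
have P : forall tau, (out tau).1 = row_mx (mxvec (relM al X1 tau)) (mxvec (relM al X2 tau)) /\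
   ((T <= tau)%N -> (out tau).2 = (s1 (tau - T), s2 (tau - T))).
  elim/ltn_ind => tau IH.
  have mem : drop T (map snd (relay_outs fcode s1 s2 e1 e2 tau)) =
      mkseq (fun i => (s1 i, s2 i)) (tau - T).
    apply: (@eq_from_nth _ (0%R, 0%R)); first by rewrite size_drop size_map ro !size_mkseq.
    move=> i; rewrite size_drop size_map ro size_mkseq => hi.
    rewrite nth_drop (nth_map 0%R) ?size_mkseq; last by lia.
    rewrite nth_mkseq; last by lia.
    rewrite nth_mkseq // (proj2 (IH _ _)); last by lia.
      by have -> : (T + i - T = i)%N by lia.
    by lia.
  have m1 : map fst (mkseq (fun i => (s1 i, s2 i)) (tau - T)) = mkseq (fun i => mxvec (X1 i)) (tau - T).
    by rewrite /mkseq -map_comp; apply: eq_map => i /=; rewrite vec_mxK.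
  have m2 : map snd (mkseq (fun i => (s1 i, s2 i)) (tau - T)) = mkseq (fun i => mxvec (X2 i)) (tau - T).
    by rewrite /mkseq -map_comp; apply: eq_map => i /=; rewrite vec_mxK.
  have w1 : window T (relay_rcv1 fcode s1 e1) tau =
     [seq channel e1 (fun sg => mxvec (srcM al X1 sg)) sg | sg <- iota (tau - T) (tau - (tau - T)).+1].
    by apply: eq_map => sg; rewrite /relay_rcv1 /channel src1.
  have w2 : window T (relay_rcv2 fcode s2 e2) tau =
     [seq channel e2 (fun sg => mxvec (srcM al X2 sg)) sg | sg <- iota (tau - T) (tau - (tau - T)).+1].
    by apply: eq_map => sg; rewrite /relay_rcv2 /channel src2.
  have [R1a R1b] := relC_ok H13 al_inj X1 tau u1 (eq_leq z1) E1.
  have [R2a R2b] := relC_ok H23 al_inj X2 tau u2 (eq_leq z2) E2.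
  rewrite /out relay_fcode mem w1 w2 m1 m2 R1a R2a; split => // hT.
  by rewrite R1b // R2b // !vec_mxK.
have relp : forall sg, relay_packet fcode s1 s2 e1 e2 sg = (out sg).1 by [].
rewrite /dest_estimate dec_fcode.
have y1 : map (omap lsubmx) (mkseq (dest_rcv fcode s1 s2 e1 e2 e3) (t + T).+1) =
    mkseq (channel e3 (fun sg => mxvec (relM al X1 sg))) (t + T).+1.
  rewrite /mkseq -map_comp; apply: eq_map => sg /=; rewrite /dest_rcv /channel.
  by case: (e3 sg) => //=; rewrite relp (proj1 (P sg)) row_mxKl.
have y2 : map (omap rsubmx) (mkseq (dest_rcv fcode s1 s2 e1 e2 e3) (t + T).+1) =
    mkseq (channel e3 (fun sg => mxvec (relM al X2 sg))) (t + T).+1.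
  rewrite /mkseq -map_comp; apply: eq_map => sg /=; rewrite /dest_rcv /channel.
  by case: (e3 sg) => //=; rewrite relp (proj1 (P sg)) row_mxKr.
rewrite y1 y2 (decC_ok H13 al_inj X1 t u3 (eq_leq z3) E3).
by rewrite (decC_ok H23 al_inj X2 t u3 (eq_leq z3) E3) !vec_mxK.
Qed.
End Final.

End Helpers.
Import Helpers.

Theorem lemma7 (N1 N2 N3 T A B : nat) :
  (N2 <= N1)%N -> (N1 + N3 <= T)%N -> (0 < A)%N -> (0 < B)%N ->
  let n := maxn (A * (T + 1 - N3))
             (maxn (B * (T + 1 - N3)) (A * (T + 1 - N1) + B * (T + 1 - N2))) in
  rate_pair_achievable N1 N2 N3 T
    ((A * (T + 1 - N1 - N3))%:R / n%:R)%R
    ((B * (T + 1 - N2 - N3))%:R / n%:R)%R.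
Proof.
move=> h21 h13 hA hB n.
case: (prime_above T) => p Tp pp.
have al_inj : forall i j, (i <= T)%N -> (j <= T)%N ->
    ((i%:R : 'F_p) = j%:R)%R -> i = j.
  move=> i j hi hj h; have := val_Fp_nat pp i; rewrite h val_Fp_nat //.
  by rewrite !modn_small //; lia.
have h23 : (N2 + N3 <= T)%N by lia.
exists 'F_p, (LS N1 N3 T * A)%N, (LS N2 N3 T * B)%N,
  (LR N1 N3 T * A + LR N2 N3 T * B)%N, (ca N1 N3 T * A)%N, (ca N2 N3 T * B)%N,
  (fcode (fun i => (i%:R : 'F_p)%R) T N1 N2 N3 A B).
have en : maxn (LS N1 N3 T * A) (maxn (LS N2 N3 T * B) (LR N1 N3 T * A + LR N2 N3 T * B)) = n.
  rewrite /n /LS /LR /ca.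
  have -> : ((T.+1 - N1 - N3 + N1) * A = A * (T + 1 - N3))%N by lia.
  have -> : ((T.+1 - N2 - N3 + N2) * B = B * (T + 1 - N3))%N by lia.
  have -> : ((T.+1 - N1 - N3 + N3) * A = A * (T + 1 - N1))%N by lia.
  have -> : ((T.+1 - N2 - N3 + N3) * B = B * (T + 1 - N2))%N by lia.
  by [].
have ek1 : (ca N1 N3 T * A = A * (T + 1 - N1 - N3))%N by rewrite /ca; lia.
have ek2 : (ca N2 N3 T * B = B * (T + 1 - N2 - N3))%N by rewrite /ca; lia.
split; first exact: fcode_ok.
- by rewrite en ek1.
- by rewrite en ek2.
Qed.
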